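(* Let $N\geq 3$ and let $\Omega\subset\mathbb{R}^N$ be a smooth bounded domain. Let $p\in C^{0,\alpha}(\overline{\Omega})$ (for some $0<\alpha<1$) be non-negative, and let $f:[0,\infty)\to[0,\infty)$ be a non-decreasing function with $f\in C^{0,\alpha}_{\rm loc}[0,\infty)$, $f(0)=0$, $f>0$ on $(0,\infty)$, and $\Lambda:=\sup_{s\geq 1} f(s)/s<\infty$. Then the problem $$\Delta u+|\nabla u|=p(x)f(u)\ \text{ in }\Omega,\qquad u\geq 0\ \text{ in }\Omega,$$ has no positive large solution in $\Omega$, i.e. there is no positive (classical) solution $u$ with $u(x)\to\infty$ as $\operatorname{dist}(x,\partial\Omega)\to 0$.
   Context: A large (explosive, blow-up) solution of the problem in a bounded domain $\Omega$ is a solution $u$ with $u(x)\to\infty$ as $\operatorname{dist}(x,\partial\Omega)\to0$. *)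

(* Defs.v *)
From HB Require Import structures.
From mathcomp Require Import all_boot all_order all_algebra.
From mathcomp Require Import all_classical all_reals all_analysis.
Set Implicit Arguments. Unset Strict Implicit. Unset Printing Implicit Defensive.
Import Order.TTheory GRing.Theory Num.Theory.
Import numFieldNormedType.Exports.
Local Open Scope classical_set_scope.
Local Open Scope ring_scope.

Section Defs.
Variables (R : realType) (N : nat).
Local Notation V := 'rV[R]_N.

Definition dotv (x y : V) : R := \sum_(i < N) x 0 i * y 0 i.
Definition enorm (x : V) : R := Num.sqrt (dotv x x).
Definition edist (x y : V) : R := enorm (x - y).

Definition evec (i : 'I_N) : V := \row_(j < N) (i == j)%:R.
Definition partial (i : 'I_N) (g : V -> R) : V -> R := fun x => 'D_(evec i) g x.

Definition iter_partial (l : seq 'I_N) (g : V -> R) : V -> R :=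
  foldr (fun i h => partial i h) g l.

Definition smooth (g : V -> R) : Prop :=
  forall (l : seq 'I_N) (x : V), differentiable (iter_partial l g) x.

Definition C2_on (A : set V) (u : V -> R) : Prop :=
  forall x, A x ->
    differentiable u x /\
    (forall i, differentiable (partial i u) x) /\
    (forall i j, {for x, continuous (partial j (partial i u))}).

Definition laplacian (u : V -> R) (x : V) : R :=
  \sum_(i < N) partial i (partial i u) x.
Definition grad_norm (u : V -> R) (x : V) : R :=
  Num.sqrt (\sum_(i < N) (partial i u x) ^+ 2).

Definition boundary (A : set V) : set V := closure A `\` A.

(* smooth bounded domain: open, connected, nonempty, bounded, and locally the
   boundary is the graph of a C^infinity function over a hyperplane nu^perp
   (nu a unit vector; gamma evaluated on the projection onto nu^perp) with the
   domain lying on one side. *)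
Definition smooth_bounded_domain (A : set V) : Prop :=
  [/\ open A, connected A, A !=set0, bounded_set A &
   forall x0, boundary A x0 ->
     exists r : R, 0 < r /\
     exists nu : V, dotv nu nu = 1 /\
     exists gamma : V -> R, smooth gamma /\
       forall x, edist x x0 < r ->
         (A x <-> gamma (x - dotv x nu *: nu) < dotv x nu)].

Definition holder_on (a : R) (A : set V) (g : V -> R) : Prop :=
  exists C : R, forall x y, A x -> A y -> `|g x - g y| <= C * (edist x y) `^ a.

(* u(x) -> +oo as dist(x, boundary A) -> 0 (dist < d  <=>  some boundary point
   at Euclidean distance < d) *)
Definition blows_up_at_boundary (A : set V) (u : V -> R) : Prop :=
  forall M : R, exists d : R, 0 < d /\
    forall x, A x -> (exists y, boundary A y /\ edist x y < d) -> M < u x.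

End Defs.

Definition holder_loc_nonneg (R : realType) (a : R) (f : R -> R) : Prop :=
  forall M : R, 0 < M -> exists C : R, forall s t, 0 <= s <= M -> 0 <= t <= M ->
    `|f s - f t| <= C * `|s - t| `^ a.

(* Main.v *)
From HB Require Import structures.
From mathcomp Require Import all_boot all_order all_algebra.
From mathcomp Require Import all_classical all_reals all_analysis.
From mathcomp Require Import ring lra.
Require Import Defs.
Import Order.TTheory GRing.Theory Num.Theory.
Import numFieldNormedType.Exports.
Local Open Scope classical_set_scope.
Local Open Scope ring_scope.

Section S.
Context {R : realType}.


Lemma second_test (g g1 : R -> R) (c d : R) : 0 < d ->
  (forall t, `|t| < d -> g 0 <= g t) ->
  (forall t : R, `|t| < d -> is_derive t 1 g (g1 t)) ->
  is_derive (0:R) 1 g1 c -> 0 <= c.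
Proof.
move=> d0 gmin gder [g1d g1c].
have g10 : g1 0 = 0.
  have : is_derive (0:R) 1 g 0.
    apply: (@derive1_at_min _ g (- d) d 0).
    - by rewrite (le_trans _ (ltW d0)) // oppr_le0 ltW.
    - move=> t; rewrite in_itv /= => /andP[h1 h2].
      by have [] := gder t ltac:(rewrite ltr_norml h1 h2).
    - by rewrite in_itv /= oppr_lt0 d0.
    - move=> t; rewrite in_itv /= => /andP[h1 h2]; apply: gmin.
      by rewrite ltr_norml h1 h2.
  move=> [_ e0]; have [_ e1] := gder 0 ltac:(by rewrite normr0).
  by rewrite -e1 e0.
rewrite leNgt; apply/negP => c0.
have := @cvgr_lt R _ _ _ _ _ g1d.
rewrite -[lim _]/('D_1 g1 0) g1c => /(_ _ 0 c0) [e /= e0 He].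
have neg x : 0 < x -> x < e -> g1 x < 0.
  move=> x0 xe; have := He x; rewrite /ball_ /= sub0r normrN gtr0_norm // => /(_ xe).
  rewrite [_%:A]mulr1 addr0 g10 subr0 (gt_eqF x0) => /(_ isT).
  by rewrite pmulr_rlt0 // invr_gt0.
set s := Num.min e d / 2.
have me : Num.min e d <= e by rewrite ge_min lexx.
have md : Num.min e d <= d by rewrite ge_min lexx orbT.
have mp : 0 < Num.min e d by rewrite lt_min e0 d0.
have s0 : 0 < s by rewrite /s; lra.
have se : s < e by rewrite /s; lra.
have sd : s < d by rewrite /s; lra.
have H1 : forall x, x \in `]0, s[ -> is_derive x 1 g (g1 x).
  move=> x; rewrite in_itv /= => /andP[x0 xs]; apply: gder.
  by rewrite gtr0_norm // (lt_trans xs sd).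
have H2 : {within `[0, s], continuous g}.
  apply: continuous_in_subspaceT => x; rewrite inE /= in_itv /= => /andP[x0 xs].
  have [dx _] := gder x ltac:(by rewrite ger0_norm // (le_lt_trans xs sd)).
  exact/differentiable_continuous/derivable1_diffP.
have [xi xiI Hxi] := @MVT R g g1 0 s s0 H1 H2.
move: xiI; rewrite in_itv /= => /andP[xi0 xis].
have := gmin s ltac:(by rewrite gtr0_norm).
rewrite -subr_ge0 Hxi subr0 pmulr_lge0 // leNgt neg //.
exact: lt_trans xis se.
Qed.

Lemma dir_is_derive (V : normedModType R) (F : V -> R) (x e : V) (t D : R) :
  is_derive (x + t *: e) e F D -> is_derive t 1 (fun s => F (x + s *: e)) D.
Proof.
move=> [dF dD].
have E : (fun h : R => h^-1 *: (((fun s => F (x + s *: e)) \o shift t) (h *: 1) - F (x + t *: e)))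
  = (fun h : R => h^-1 *: ((F \o shift (x + t *: e)) (h *: e) - F (x + t *: e))).
  apply: funext => h /=; congr (_ *: (F _ - _)).
  by rewrite [h *: 1]mulr1 scalerDl addrCA addrC.
apply: DeriveDef; first by rewrite /derivable E.
by rewrite /derive E.
Qed.


Lemma coord_le {N} (y : 'rV[R]_N) j : `|y 0 j| <= `|y|.
Proof.
have /mapP[k Hk ->] : `|y 0 j| \in [seq `|y x.1 x.2| | x : 'I_1 * 'I_N].
  by apply/mapP; exists (0, j) => //=; rewrite mem_enum.
by rewrite [leRHS]/Num.Def.normr /= mx_normrE; apply/bigmax_geP; right => /=; exists k.
Qed.

Lemma evec_norm {N} (i : 'I_N) : `|evec R i| <= 1.
Proof.
rewrite [leLHS]/Num.Def.normr /= mx_normrE; apply: bigmax_le => // -[a b] _ /=.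
by rewrite /evec mxE; case: (i == b); rewrite ?normr1 ?normr0.
Qed.

Lemma edist_le {N} (x y : 'rV[R]_N) : edist x y <= N%:R * `|x - y|.
Proof.
rewrite /edist /enorm /dotv.
set m := `|x - y|.
have m0 : 0 <= m by exact: normr_ge0.
have H : \sum_(i < N) (x - y) 0 i * (x - y) 0 i <= (N%:R * m) ^+ 2.
  apply: (@le_trans _ _ (\sum_(i < N) m ^+ 2)).
    apply: ler_sum => i _.
    have := coord_le (x - y) i; rewrite -/m => hi.
    move: hi; set v := (x - y) 0 i => hi.
    rewrite -expr2 -real_normK ?num_real //.
    by rewrite lerXn2r // ?nnegrE.
  rewrite sumr_const card_ord.
  have hk : N%:R = 0 :> R \/ 1 <= N%:R :> R.
    by case: (N) => [|n]; [left|right; rewrite ler1n].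
  rewrite -mulr_natr; case: hk => hk; [rewrite hk; nra | nra].
rewrite -(ger0_norm (_ : 0 <= N%:R * m)); last by apply: mulr_ge0.
by rewrite -sqrtr_sqr ler_sqrt // sqr_ge0.
Qed.
End S.

Lemma expd {R : realType} (A0 K t : R) :
  is_derive t 1 (fun s : R => expR (A0 + s * K)) (K * expR (A0 + t * K)).
Proof.
have h1 := @dir_is_derive R R id A0 K t K (is_derive_id _ _).
have h2 := @is_derive1_comp R expR (fun s : R => id (A0 + s *: K)) t _ _ (is_derive_expR _) h1.
by rewrite mulrC; exact: h2.
Qed.

Theorem theorem1 (R : realType) (N : nat) (hN : (3 <= N)%N)
  (Omega : set 'rV[R]_N) (hOmega : smooth_bounded_domain Omega)
  (alpha : R) (halpha : 0 < alpha < 1)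
  (p : 'rV[R]_N -> R) (hp_holder : holder_on alpha (closure Omega) p)
  (hp_nonneg : forall x, closure Omega x -> 0 <= p x)
  (f : R -> R)
  (hf_range : forall s, 0 <= s -> 0 <= f s)
  (hf_mono : forall s t, 0 <= s -> s <= t -> f s <= f t)
  (hf_holder : holder_loc_nonneg alpha f)
  (hf0 : f 0 = 0)
  (hf_pos : forall s, 0 < s -> 0 < f s)
  (hLambda : exists L : R, forall s, 1 <= s -> f s / s <= L) :
  ~ exists u : 'rV[R]_N -> R,
      [/\ C2_on Omega u,
          (forall x, Omega x -> 0 < u x),
          (forall x, Omega x -> laplacian u x + grad_norm u x = p x * f (u x)) &
          blows_up_at_boundary Omega u].
Proof.
move=> [u [C2 upos ueq blow]].
case: hOmega => oO _ [x0 Ox0] bO _.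
have [B [B0 HB]] : exists B : R, 0 <= B /\ forall x, Omega x -> `|x| <= B.
  case: bO => M [_ HM]; exists (`|M| + 1); split; first by rewrite addr_ge0.
  move=> x Ox; apply: (HM (`|M| + 1)) => //.
  by rewrite (le_lt_trans (ler_norm M)) // ltrDl.
have N0 : (0 < N)%N by apply: leq_trans hN.
pose i0 : 'I_N := Ordinal N0.
have NR0 : 0 < N%:R :> R by rewrite ltr0n.
case: hp_holder => C HC.
pose D := N%:R * (2 * B).
have D0 : 0 <= D by rewrite mulr_ge0 // mulr_ge0.
have Hd : forall x, Omega x -> edist x x0 <= D.
  move=> x Ox; apply: (le_trans (edist_le x x0)); rewrite /D ler_pM2l //.
  by apply: (le_trans (ler_normB _ _)); have := HB _ Ox; have := HB _ Ox0; lra.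
pose P := p x0 + `|C| * D `^ alpha.
have Hp : forall x, Omega x -> 0 <= p x <= P.
  move=> x Ox; rewrite hp_nonneg /=; last exact: subset_closure.
  have := HC x x0 (subset_closure Ox) (subset_closure Ox0).
  have h1 : edist x x0 `^ alpha <= D `^ alpha.
    have al0 : 0 <= alpha by case/andP: halpha => /ltW.
    apply: ge0_ler_powR; [exact: al0 | rewrite nnegrE; exact: sqrtr_ge0 | by rewrite nnegrE | exact: Hd].
  have h2 : C * edist x x0 `^ alpha <= `|C| * D `^ alpha.
    apply: (le_trans (ler_wpM2r (powR_ge0 _ _) (ler_norm C))).
    by apply: ler_wpM2l.
  move=> h3; have := ler_norm (p x - p x0); rewrite /P; lra.
have P0 : 0 <= P by have /andP[h1 h2] := Hp _ Ox0; lra.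
case: hLambda => L HL.
have Hf : forall s, 0 < s -> f s <= `|L| * s + f 1.
  move=> s s0; have f1 : 0 <= f 1 by apply: hf_range.
  have Ls : 0 <= `|L| * s by rewrite mulr_ge0 // ltW.
  case: (leP 1 s) => s1.
    have := HL s s1; rewrite ler_pdivrMr // => h.
    have : L * s <= `|L| * s by apply: ler_wpM2r; [apply: le_trans s1; exact: ler01 | exact: ler_norm].
    lra.
  have := hf_mono s 1 (ltW s0) (ltW s1); lra.
pose a := P * `|L| + 1.
pose b := P * f 1.
have a1 : 1 <= a by rewrite /a lerDr mulr_ge0.
have a0 : 0 < a by lra.
have b0 : 0 <= b by rewrite mulr_ge0 // hf_range.
have Hlap : forall x, Omega x -> laplacian u x <= a * u x + b.
  move=> x Ox; have := ueq x Ox; have := sqrtr_ge0 (\sum_(i < N) (partial i u x) ^+ 2).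
  rewrite -/(grad_norm u x) => g0 e.
  have ux := upos x Ox; have := Hf _ ux; have := Hp x Ox => /andP[p0 pP].
  have fu := hf_range (u x) (ltW ux).
  rewrite /a /b => hf.
  have : p x * f (u x) <= P * (`|L| * u x + f 1).
    apply: (le_trans (ler_wpM2r fu pP)); exact: ler_wpM2l.
  lra.
pose h := fun y : 'rV[R]_N => expR (a * y 0 i0).
pose HM := expR (a * B).
have hb : forall y, Omega y -> h y <= HM.
  move=> y Oy; rewrite /h /HM ler_expR ler_pM2l //.
  apply: (le_trans (ler_norm _)); apply: (le_trans (coord_le y i0)); exact: HB.
have hpos : forall y, 0 < h y by move=> y; exact: expR_gt0.
pose n := (u x0 + b / a) / h x0 + 1.
have ba0 : 0 <= b / a by rewrite divr_ge0 // ltW.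
have n0 : 0 < n.
  rewrite /n; have := upos _ Ox0; have := hpos x0 => hx ux.
  have : 0 <= (u x0 + b / a) / h x0 by rewrite divr_ge0 // ?ltW //; lra.
  lra.
pose z := fun y => u y - n * h y + b / a.
have zx0 : z x0 < 0.
  have -> : z x0 = - h x0.
    rewrite /z /n mulrDl mul1r divfK; last exact: lt0r_neq0.
    ring.
  by rewrite oppr_lt0.
have zcont : forall y, Omega y -> {for y, continuous z}.
  move=> y Oy.
  have cu : {for y, continuous u} by apply: differentiable_continuous; case: (C2 y Oy).
  have ch : {for y, continuous h}.
    apply: continuous_comp; last exact: continuous_expR.
    apply: continuous_comp; first exact: coord_continuous.
    exact: mulrl_continuous.
  have e1 : {for y, continuous (fun w => u w - n * h w)}.
    apply: continuousB => //.
    apply: continuousM => //; exact: cst_continuous.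
  apply: continuousD => //; exact: cst_continuous.
pose K := Omega `&` [set y | z y <= z x0].
have Kcl : closed K.
  move=> y yK.
  have Oy : Omega y.
    apply: contrapT => nOy.
    have bdy : boundary Omega y.
      split => //; apply: (closureS _ yK); by move=> w1 [].

    have [d [d0 Hd']] := blow (z x0 + n * HM - b / a).
    have nb : nbhs y (ball y (d / N%:R)) by apply: nbhsx_ballx; rewrite divr_gt0.
    have [w [[Ow zw] byw]] := yK _ nb.
    have ew : edist w y < d.
      apply: (le_lt_trans (edist_le w y)).
      move: byw; rewrite -ball_normE /ball_ /= distrC => hw.
      by rewrite -ltr_pdivlMl // mulrC.
    have := Hd' w Ow (ex_intro _ y (conj bdy ew)).
    have := hb w Ow; move: zw; rewrite /z => zw hw.
    have : n * h w <= n * HM by rewrite ler_pM2l.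
    rewrite /= in zw; lra.
  split => //; rewrite /= leNgt; apply/negP => hy.
  have := @cvgr_gt R _ _ _ z (z y) (zcont y Oy) (z x0) hy.
  move=> /(_ _) nb; have [w [[_ zw] zw']] := yK _ nb; move: zw'; rewrite /= ltNge zw //.
have Kb : bounded_set K.
  move: bO; rewrite /= /bounded_near; apply: filterS => M HM' w [Ow _]; exact: HM'.
have Kc := bounded_closed_compact Kb Kcl.
have [xs xsK xsmin] : exists2 xs, xs \in K & forall t, t \in K -> z xs <= z t.
  apply: EVT_min_rV => //; first by exists x0; split => //=.
  apply: continuous_in_subspaceT => y; rewrite inE => -[Oy _]; exact: zcont.
move: xsK; rewrite inE => -[Oxs zxs].
have zmin : forall y, Omega y -> z xs <= z y.
  move=> y Oy; case: (leP (z y) (z x0)) => hy.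
    by apply: xsmin; rewrite inE.
  exact: (le_trans zxs (ltW hy)).
have nO : nbhs xs Omega.
  have : open_nbhs xs Omega by split.
  by rewrite open_nbhsE => -[].
have [r r0 Hr] := (iffLR (nbhs_ballP xs Omega)) nO.
have ci : forall i : 'I_N, 0 <= partial i (partial i u) xs
    - n * ((a * evec R i 0 i0) * ((a * evec R i 0 i0) * h xs)).
  move=> i; set e := evec R i; set k := a * e 0 i0; set A0 := a * xs 0 i0.
  have inO : forall t : R, `|t| < r -> Omega (xs + t *: e).
    move=> t ht; apply: Hr; rewrite -ball_normE /ball_ /=.
    rewrite opprD addrA subrr sub0r normrN normrZ.
    apply: le_lt_trans ht; rewrite -[leRHS]mulr1; apply: ler_wpM2l => //.
    exact: evec_norm.
  have hE : forall t, h (xs + t *: e) = expR (A0 + t * k).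
    by move=> t; rewrite /h /A0 /k /e !mxE; congr expR; ring.
  apply: (@second_test R (fun t => u (xs + t *: e) - n * expR (A0 + t * k) + b / a)
     (fun t => partial i u (xs + t *: e) - n * (k * expR (A0 + t * k))) _ r r0).
  - move=> t ht; have := zmin _ (inO t ht); rewrite /z hE /=.
    by rewrite scale0r addr0 mul0r addr0 /h -/A0.
  - move=> t ht.
    have d1 : is_derive t 1 (fun s => u (xs + s *: e)) ('D_e u (xs + t *: e)).
      apply: dir_is_derive; apply: DeriveDef => //; apply: diff_derivable.
      by case: (C2 _ (inO t ht)).
    have d2 := expd A0 k t.
    have := is_deriveD (is_deriveB d1 (is_deriveZ n d2)) (is_derive_cst (b / a) t 1).
    rewrite addr0 => H; exact: H.
  - have d3 : is_derive (0:R) 1 (fun s => partial i u (xs + s *: e))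
        ('D_e (partial i u) (xs + 0 *: e)).
      apply: dir_is_derive; apply: DeriveDef => //; apply: diff_derivable.
      rewrite scale0r addr0; by case: (C2 _ Oxs) => _ [].
    have d4 := is_deriveZ k (expd A0 k 0).
    have := is_deriveB d3 (is_deriveZ n d4).
    rewrite scale0r addr0 mul0r addr0 /h -/A0 => H; exact: H.
have S : 0 <= \sum_(i < N) (partial i (partial i u) xs
    - n * ((a * evec R i 0 i0) * ((a * evec R i 0 i0) * h xs))).
  by apply: sumr_ge0 => i _; exact: ci.
rewrite sumrB -/(laplacian u xs) in S.
have SB : \sum_(i < N) n * ((a * evec R i 0 i0) * ((a * evec R i 0 i0) * h xs))
    = n * (a * (a * h xs)).
  rewrite (bigD1 i0) //= big1 ?addr0; first by rewrite /evec mxE eqxx mulr1.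
  by move=> j /negbTE hj; rewrite /evec mxE hj mulr0 mul0r mulr0.
rewrite SB in S.
have Hl := Hlap xs Oxs.
have Hx := hpos xs.
have zneg : z xs < 0 by apply: le_lt_trans zx0.
move: zneg; rewrite /z => zneg.
have e : a * (b / a) = b by rewrite mulrC divfK // lt0r_neq0.
have m1 : a * (u xs - n * h xs + b / a) < 0 by rewrite pmulr_rlt0.
have nH0 : 0 <= a * (n * h xs) by rewrite mulr_ge0 ?ltW // mulr_gt0.
have m2 : a * (n * h xs) <= a * a * (n * h xs).
  by rewrite -mulrA ler_peMl.
move: S Hl m1 m2 e.
set L0 := laplacian u xs; set U := u xs; set H := h xs.
move=> S Hl m1 m2 e.
have : a * (U - n * H + b / a) = a * U - a * (n * H) + b by rewrite mulrDr e; ring.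
have : n * (a * (a * H)) = a * a * (n * H) by ring.
lra.
Qed.
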